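(* Let $q\in(0,1]$. For $\nu\in\mathfrak h^*$ and $\lambda\in P_+$, \[ \varphi^\nu_q(\lambda) = \frac{\varphi^\nu_1(q^{2\lambda+2\rho})}{\varphi^\nu_1(q^{2\rho})}, \] as an identity of the defining formulas (valid for generic $\nu$, i.e. whenever no denominator vanishes, and in general by analytic continuation in $\nu$).
   Context: $K$ is a connected simply connected compact simple Lie group with complexification $G=KAN$ (Iwasawa decomposition), $\mathfrak h$ a Cartan subalgebra, $\Delta_+$ positive roots, $W$ the Weyl group with length function $l$, $P_+$ dominant weights, $\rho=\frac12\sum_{\alpha\in\Delta_+}\alpha$, $(\cdot,\cdot)$ the invariant form normalized by $(\alpha,\alpha)=2$ for short roots. For $\mu\in\mathfrak h^*_{\mathbb{R}}$, $q^\mu\in A$. Define $A_\nu(q^\mu)=\sum_{w\in W}(-1)^{l(w)}q^{(\mu,w\nu)}$, $\chi_\nu(q^\mu)=A_{\nu+\rho}(q^\mu)/A_\rho(q^\mu)$ (analytic continuation of the Weyl character formula), with $\chi_\nu(1)=\prod_{\alpha\in\Delta_+}(\nu+\rho,\alpha)/\prod_{\alpha\in\Delta_+}(\rho,\alpha)$. Set $\varphi^\nu_1(q^\mu)=\chi_{\frac12\nu-\rho}(q^\mu)/\chi_{\frac12\nu-\rho}(1)$ and $\varphi^\nu_q(\lambda)=\chi_\lambda(q^\nu)/\chi_\lambda(q^{2\rho})$ for $\lambda\in P_+$. *)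

(* Defs.v *)
From mathcomp Require Import all_boot all_order all_algebra.
From mathcomp Require Import reals sequences exp trigo.
From mathcomp Require Import complex.

Set Implicit Arguments.
Unset Strict Implicit.
Unset Printing Implicit Defensive.

Import Order.TTheory GRing.Theory Num.Theory.
Local Open Scope ring_scope.
Local Open Scope complex_scope.

(* Real Cartan subalgebra  h*_R  =  R^n  (row vectors), equipped with the    *)
(* invariant form, realised in orthonormal coordinates as the dot product.  *)
(* The complexification h* = C^n with C = R[i], the form being extended     *)
(* C-bilinearly.                                                             *)

Definition dotv (R : realType) (n : nat) (u v : 'rV[R]_n) : R := (u *m v^T) 0 0.

Definition cdotv (R : realType) (n : nat) (u v : 'rV[R[i]]_n) : R[i] :=
  (u *m v^T) 0 0.

Definition toCv (R : realType) (n : nat) (v : 'rV[R]_n) : 'rV[R[i]]_n :=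
  map_mx (fun x : R => x%:C) v.
Definition toCm (R : realType) (n : nat) (w : 'M[R]_n) : 'M[R[i]]_n :=
  map_mx (fun x : R => x%:C) w.

(* Orthogonal reflection in the hyperplane orthogonal to a; acting on row
   vectors on the right:  v *m reflmx a = v - (2 (v,a)/(a,a)) a. *)
Definition reflmx (R : realType) (n : nat) (a : 'rV[R]_n) : 'M[R]_n :=
  1%:M - (2 / dotv a a) *: (a^T *m a).

Definition rows_mx (R : realType) (n : nat) (s : seq 'rV[R]_n) :
  'M[R]_(size s, n) := \matrix_(i < size s, j < n) (nth 0 s i) 0 j.

(* Reduced, crystallographic, irreducible root system in R^n (spanning R^n,
   i.e. the root system of a compact simple Lie algebra with Cartan
   subalgebra of dimension n), with the invariant form normalised so that
   short roots have (a,a) = 2. *)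
Definition simple_root_system (R : realType) (n : nat) (Phi : seq 'rV[R]_n)
  : Prop :=
  [/\ uniq Phi, Phi != [::], (0 : 'rV[R]_n) \notin Phi &
      \rank (rows_mx Phi) = n] /\
      (forall a b, a \in Phi -> b \in Phi -> b *m reflmx a \in Phi) /\
      (forall a b, a \in Phi -> b \in Phi ->
          exists z : int, 2 * dotv b a / dotv a a = z%:~R) /\
      (forall a (c : R), a \in Phi -> c *: a \in Phi -> c = 1 \/ c = -1) /\
      (forall P : pred 'rV[R]_n,
          (forall a b, a \in Phi -> b \in Phi -> P a -> ~~ P b -> dotv a b = 0)
          -> all P Phi \/ all (predC P) Phi) /\
      (forall a, a \in Phi -> 2 <= dotv a a) /\
      (exists2 a, a \in Phi & dotv a a = 2).

Definition positive_system (R : realType) (n : nat) (Phi Pos : seq 'rV[R]_n)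
  : Prop :=
  uniq Pos /\
  exists v : 'rV[R]_n, (forall a, a \in Phi -> dotv a v != 0) /\
    (forall a, (a \in Pos) = (a \in Phi) && (0 < dotv a v)).

Definition is_weyl (R : realType) (n : nat) (Phi : seq 'rV[R]_n) (w : 'M[R]_n)
  : Prop :=
  exists s : seq 'rV[R]_n, all (mem Phi) s /\ w = \prod_(a <- s) reflmx a.

Definition weyl_enum (R : realType) (n : nat) (Phi : seq 'rV[R]_n)
  (Wl : seq 'M[R]_n) : Prop :=
  uniq Wl /\ forall w, w \in Wl <-> is_weyl Phi w.

(* length l(w) = number of positive roots sent to negative roots by w *)
Definition wlen (R : realType) (n : nat) (Pos : seq 'rV[R]_n) (w : 'M[R]_n)
  : nat := count (fun a => - (a *m w) \in Pos) Pos.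

Definition dominant (R : realType) (n : nat) (Pos : seq 'rV[R]_n)
  (lam : 'rV[R]_n) : Prop :=
  forall a, a \in Pos -> exists k : nat, 2 * dotv lam a / dotv a a = k%:R.

Definition rho (R : realType) (n : nat) (Pos : seq 'rV[R]_n) : 'rV[R]_n :=
  2^-1 *: \sum_(a <- Pos) a.

Definition qpow (R : realType) (q : R) (z : R[i]) : R[i] :=
  (expR (complex.Re z * ln q))%:C *
  ((cos (complex.Im z * ln q))%:C + 'i * (sin (complex.Im z * ln q))%:C).

(* A_nu(q^mu) = sum_{w in W} (-1)^{l(w)} q^{(mu, w nu)} *)
Definition Aq (R : realType) (n : nat) (Pos : seq 'rV[R]_n) (Wl : seq 'M[R]_n)
  (q : R) (nu mu : 'rV[R[i]]_n) : R[i] :=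
  \sum_(w <- Wl) (-1) ^+ (wlen Pos w) * qpow q (cdotv mu (nu *m toCm w)).

(* chi_nu(q^mu) = A_{nu+rho}(q^mu) / A_rho(q^mu) *)
Definition chiq (R : realType) (n : nat) (Pos : seq 'rV[R]_n)
  (Wl : seq 'M[R]_n) (q : R) (nu mu : 'rV[R[i]]_n) : R[i] :=
  Aq Pos Wl q (nu + toCv (rho Pos)) mu / Aq Pos Wl q (toCv (rho Pos)) mu.

(* chi_nu(1) given by the Weyl dimension formula *)
Definition chi1 (R : realType) (n : nat) (Pos : seq 'rV[R]_n)
  (nu : 'rV[R[i]]_n) : R[i] :=
  (\prod_(a <- Pos) cdotv (nu + toCv (rho Pos)) (toCv a)) /
  (\prod_(a <- Pos) cdotv (toCv (rho Pos)) (toCv a)).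

(* phi^nu_1(q^mu) = chi_{nu/2 - rho}(q^mu) / chi_{nu/2 - rho}(1) *)
Definition phi1 (R : realType) (n : nat) (Pos : seq 'rV[R]_n)
  (Wl : seq 'M[R]_n) (q : R) (nu mu : 'rV[R[i]]_n) : R[i] :=
  chiq Pos Wl q (2^-1 *: nu - toCv (rho Pos)) mu /
  chi1 Pos (2^-1 *: nu - toCv (rho Pos)).

(* phi^nu_q(lambda) = chi_lambda(q^nu) / chi_lambda(q^{2 rho}) *)
Definition phiq (R : realType) (n : nat) (Pos : seq 'rV[R]_n)
  (Wl : seq 'M[R]_n) (q : R) (nu : 'rV[R[i]]_n) (lam : 'rV[R]_n) : R[i] :=
  chiq Pos Wl q (toCv lam) nu / chiq Pos Wl q (toCv lam) (toCv (2 *: rho Pos)).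

(* Main.v *)
Require Import Defs.
From mathcomp Require Import all_boot all_order all_algebra.
From mathcomp Require Import reals sequences exp trigo.
From mathcomp Require Import complex.
From mathcomp Require Import ring.
Import Order.TTheory GRing.Theory Num.Theory.
Local Open Scope ring_scope.
Local Open Scope complex_scope.
Set Implicit Arguments.

Lemma refl_tr (R : realType) (n : nat) (a : 'rV[R]_n) : (reflmx a)^T = reflmx a.
Proof. by rewrite /reflmx linearB /= trmx1 linearZ /= trmx_mul trmxK. Qed.

Lemma refl_sq (R : realType) (n : nat) (a : 'rV[R]_n) : dotv a a != 0 ->
  reflmx a *m reflmx a = 1%:M.
Proof.
move=> ha; rewrite /reflmx.
set c := 2 / dotv a a.
have hP : (a^T *m a) *m (a^T *m a) = dotv a a *: (a^T *m a).
  by rewrite mulmxA -(mulmxA a^T) [a *m a^T]mx11_scalar mul_mx_scalar -scalemxAl.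
rewrite mulmxBl mul1mx mulmxBr mulmx1 -scalemxAl -scalemxAr.
rewrite hP !scalerA.
have -> : c * c * dotv a a = c * 2 by rewrite -mulrA /c mulfVK.
apply/matrixP=> i j; rewrite !mxE; ring.
Qed.

Lemma toCvD (R : realType) (n : nat) (u v : 'rV[R]_n) : toCv (u + v) = toCv u + toCv v.
Proof. by apply/matrixP=> i j; rewrite !mxE /= rmorphD. Qed.
Lemma toCvZ (R : realType) (n : nat) (c : R) (v : 'rV[R]_n) : toCv (c *: v) = c%:C *: toCv v.
Proof. by apply/matrixP=> i j; rewrite !mxE /= rmorphM. Qed.
Lemma toCmT (R : realType) (n : nat) (w : 'M[R]_n) : toCm w^T = (toCm w)^T.
Proof. by rewrite /toCm map_trmx. Qed.

Lemma weyl_props (R : realType) (n : nat) (Phi : seq 'rV[R]_n) w :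
  (forall a, a \in Phi -> dotv a a != 0) ->
  is_weyl Phi w -> is_weyl Phi w^T /\ w *m w^T = 1%:M.
Proof.
move=> hPhi [s [hs ->]]; elim: s hs => [|a s IH] /=.
  by move=> _; rewrite big_nil trmx1; split; [exists [::]; rewrite big_nil | rewrite mulmx1].
move/andP=> [ha hs]; have [[s' [hs' e]] o] := IH hs.
rewrite big_cons; split.
  exists (rcons s' a); split; first by rewrite all_rcons hs' andbT.
  rewrite big_rcons /= -[_ * _]/(mulmx _ _) trmx_mul -e refl_tr; done.
rewrite -[_ * _]/(mulmx _ _) trmx_mul mulmxA -(mulmxA (reflmx a)) o mulmx1 refl_tr.
exact: refl_sq (hPhi a ha).
Qed.

Lemma wlen_le (R : realType) (n : nat) (Pos : seq 'rV[R]_n) w :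
  uniq Pos -> w *m w^T = 1%:M -> (wlen Pos w <= wlen Pos w^T)%N.
Proof.
move=> uP o; rewrite /wlen -!size_filter.
have inj : injective (fun a : 'rV[R]_n => - (a *m w)).
  move=> a b /= /oppr_inj e.
  by rewrite -(mulmx1 a) -(mulmx1 b) -o !mulmxA e.
rewrite -(size_map (fun a : 'rV[R]_n => - (a *m w))).
apply: uniq_leq_size; first by rewrite (map_inj_uniq inj) filter_uniq.
move=> b /mapP [a]; rewrite mem_filter => /andP [h1 h2] ->.
by rewrite mem_filter h1 andbT mulNmx -mulmxA o mulmx1 opprK.
Qed.

Lemma wlenT (R : realType) (n : nat) (Pos : seq 'rV[R]_n) w :
  uniq Pos -> w *m w^T = 1%:M -> wlen Pos w^T = wlen Pos w.
Proof.
move=> uP o; apply/eqP; rewrite eqn_leq.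
have -> : (wlen Pos w <= wlen Pos w^T)%N by apply: wlen_le.
by rewrite andbT -{2}(trmxK w) wlen_le // trmxK; apply: mulmx1C.
Qed.

Lemma cdot_swap (R : realType) (n : nat) (x y : 'rV[R[i]]_n) (w : 'M[R]_n) :
  cdotv x (y *m toCm w^T) = cdotv y (x *m toCm w).
Proof.
rewrite /cdotv toCmT.
have -> : (x *m (y *m (toCm w)^T)^T) 0 0 = ((x *m (y *m (toCm w)^T)^T)^T) 0 0.
  by rewrite [in RHS]mxE.
by rewrite !trmx_mul !trmxK mulmxA.
Qed.

Lemma cdot_scale (R : realType) (n : nat) (c : R[i]) (x y : 'rV[R[i]]_n) (w : 'M[R]_n) :
  cdotv y ((c *: x) *m toCm w) = cdotv (c *: y) (x *m toCm w).
Proof.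
by rewrite /cdotv -scalemxAl linearZ /= -scalemxAr -scalemxAl.
Qed.

Lemma Aq_sym (R : realType) (n : nat) (Phi Pos : seq 'rV[R]_n) (Wl : seq 'M[R]_n) q x y :
  (forall a, a \in Phi -> dotv a a != 0) -> uniq Pos -> weyl_enum Phi Wl ->
  Aq Pos Wl q x y = Aq Pos Wl q y x.
Proof.
move=> hPhi uP [uW hW].
have pe : perm_eq Wl (map trmx Wl).
  apply: uniq_perm => //; first by rewrite (map_inj_uniq (@trmx_inj _ _ _)).
  move=> w; rewrite -{2}(trmxK w) (mem_map (@trmx_inj _ _ _)).
  apply/idP/idP => /hW /(weyl_props hPhi) [/hW h _] //.
  by rewrite trmxK in h.
rewrite /Aq [in RHS](perm_big _ pe) big_map; apply: eq_big_seq => w /hW wW.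
have [_ o] := weyl_props hPhi wW.
by rewrite (wlenT Pos uP o) (@cdot_swap R n x y w).
Qed.

Lemma Aq_scale (R : realType) (n : nat) (Pos : seq 'rV[R]_n) (Wl : seq 'M[R]_n) q c x y :
  Aq Pos Wl q (c *: x) y = Aq Pos Wl q x (c *: y).
Proof. by rewrite /Aq; apply: eq_bigr => w _; rewrite cdot_scale. Qed.

Lemma final_alg (F : fieldType) (a b c d k a' b' c' : F) :
  a' = a -> b' = b -> c' = c -> b != 0 -> c != 0 -> d != 0 -> k != 0 ->
  (a / b) / (c / d) = ((a' / c') / k) / ((b' / d) / k).
Proof. move=> -> -> -> hb hc hd hk; field; by rewrite hb hc hd hk. Qed.

Unset Implicit Arguments.

Theorem proposition4p3 (R : realType) (n : nat)
  (Phi Pos : seq 'rV[R]_n) (Wl : seq 'M[R]_n) (q : R)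
  (nu : 'rV[R[i]]_n) (lam : 'rV[R]_n) :
  simple_root_system Phi ->
  positive_system Phi Pos ->
  weyl_enum Phi Wl ->
  0 < q <= 1 ->
  dominant Pos lam ->
  (* genericity: none of the denominators in the defining formulas vanish *)
  let rC := toCv (rho Pos) in
  let lC := toCv lam in
  Aq Pos Wl q rC nu != 0 ->
  Aq Pos Wl q rC (toCv (2 *: rho Pos)) != 0 ->
  chiq Pos Wl q lC (toCv (2 *: rho Pos)) != 0 ->
  Aq Pos Wl q rC (toCv (2 *: (lam + rho Pos))) != 0 ->
  \prod_(a <- Pos) cdotv rC (toCv a) != 0 ->
  chi1 Pos (2^-1 *: nu - rC) != 0 ->
  phi1 Pos Wl q nu (toCv (2 *: rho Pos)) != 0 ->
  phiq Pos Wl q nu lam =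
  phi1 Pos Wl q nu (toCv (2 *: (lam + rho Pos))) /
  phi1 Pos Wl q nu (toCv (2 *: rho Pos)).
Proof.
move=> hS [uP _] hW _ _ rC lC hb hd hcd hc _ hk _.
have hPhi : forall a, a \in Phi -> dotv a a != 0.
  case: hS => _ [_ [_ [_ [_ [h _]]]]] a /h ha.
  by rewrite gt_eqF // (lt_le_trans _ ha).
have sym := fun x y => Aq_sym Pos q x y hPhi uP hW.
have e2 : (2 : R)%:C = 2 by rewrite rmorph_nat.
have T2 : toCv (2 *: rho Pos) = 2 *: rC by rewrite toCvZ e2.
have T1 : toCv (2 *: (lam + rho Pos)) = 2 *: (lC + rC) by rewrite toCvZ toCvD e2.
have h2 : (2 : R[i]) != 0 by rewrite pnatr_eq0.
have half : forall X, Aq Pos Wl q (2^-1 *: nu) (2 *: X) = Aq Pos Wl q X nu.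
  move=> X; rewrite Aq_scale scalerA mulVf // scale1r.
  exact: sym.
have rr : forall X, Aq Pos Wl q rC (2 *: X) = Aq Pos Wl q X (2 *: rC).
  by move=> X; rewrite sym Aq_scale.
have hrc : 2^-1 *: nu - rC + rC = 2^-1 *: nu by rewrite subrK.
rewrite /phiq /phi1 /chiq.
apply: final_alg.
- by rewrite hrc T1 half.
- by rewrite hrc T2 half.
- by rewrite T1 rr T2.
- exact: hb.
- move: hcd; rewrite /chiq; apply: contraNneq => ->; by rewrite mul0r.
- exact: hd.
- exact: hk.
Qed.
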